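(* Let $q=2^f\geq 4$ and $I=\{0,\ f,\ 2f/\gcd(3,f),\ 4f/\gcd(3,f)\}$. Let $b\in\mathbb{F}_{q^2}^\times$ with $b+b^q=1$ and $b^{q+1}\neq 1$, and let $a\in\mathbb{F}_{q^2}^\times$ have order $q+1$ and satisfy: $(1+b+b^2)^{2^i}\neq a+a^{-1}+1$ for all $i\in I$; $(1+b+b^2)^{2^i}\neq a(1+b+b^3+b^4)+a^{-1}(b^2+b^3+b^4)$ for all $i\in I$; $a+a^{-1}+1\neq a(1+b+b^3+b^4)+a^{-1}(b^2+b^3+b^4)$; and $a+a^{-1}+1\neq 0$. Let \[ X=\begin{pmatrix}b&1&1\\ b^q&0&1\\ b^{q+1}&b&b^q\end{pmatrix},\quad Y=\begin{pmatrix}ab+a^{-1}b^q&0&a(b+b^{q+1})+a^{-1}(b^q+b^{q+1})\\ 0&1&0\\ a+a^{-1}&0&ab+a^{-1}b^q\end{pmatrix},\quad Z=\begin{pmatrix}1&0&1\\ 0&1&0\\ 0&0&1\end{pmatrix}, \] which lie in $\mathrm{SU}_3(q)$, and let $x,y,z$ be their images under the natural projection $\eta:\mathrm{SU}_3(q)\to\mathrm{PSU}_3(q)$. Then $x,y,z$ each have order $2$, and $zy$ has order $q+1$.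
   Context: Here $\mathrm{SU}_3(q)=\{A\in\mathrm{SL}_3(q^2): \overline{A}^{T}WA=W\}$, where $\overline{(a_{ij})}=(a_{ij}^q)$ and $W=\begin{pmatrix}0&0&1\\0&1&0\\1&0&0\end{pmatrix}$, and $\mathrm{PSU}_3(q)=\mathrm{SU}_3(q)/Z(\mathrm{SU}_3(q))$. *)

(* Defs.v *)
From HB Require Import structures.
From mathcomp Require Import all_boot all_order all_algebra all_fingroup all_solvable all_field.
Set Implicit Arguments. Unset Strict Implicit. Unset Printing Implicit Defensive.
Import GRing.Theory.
Local Open Scope ring_scope.

Definition mx3 (R : nzRingType) (a11 a12 a13 a21 a22 a23 a31 a32 a33 : R) : 'M[R]_3 :=
  \matrix_(i < 3, j < 3)
    nth 0 (nth [::] [:: [:: a11; a12; a13]; [:: a21; a22; a23]; [:: a31; a32; a33]] i) j.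

Definition Wmx (R : nzRingType) : 'M[R]_3 := mx3 0 0 1 0 1 0 1 0 0.

(* entrywise q-power (field automorphism of F_{q^2} of order 2) *)
Definition qbar (F : fieldType) (q : nat) (A : 'M[F]_3) : 'M[F]_3 :=
  map_mx (fun x => x ^+ q) A.

Definition SU3 (F : finFieldType) (q : nat) : {set {'GL_3[F]}} :=
  [set g : {'GL_3[F]} | (\det (val g) == 1)
                      && ((qbar q (val g))^T *m Wmx F *m val g == Wmx F)].

Definition etaPSU (F : finFieldType) (q : nat) (g : {'GL_3[F]}) :=
  coset 'Z(SU3 F q) g.

(* Main.v *)
Require Import Defs.
From HB Require Import structures.
From mathcomp Require Import all_boot all_order all_algebra all_fingroup all_solvable all_field.
From mathcomp Require Import ring.
Import GRing.Theory.
Local Open Scope ring_scope.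

Section MX3.
Variable R : comNzRingType.

Lemma mx3_mul (a11 a12 a13 a21 a22 a23 a31 a32 a33
               b11 b12 b13 b21 b22 b23 b31 b32 b33 : R) :
  mx3 a11 a12 a13 a21 a22 a23 a31 a32 a33 *m mx3 b11 b12 b13 b21 b22 b23 b31 b32 b33 =
  mx3 (a11*b11 + a12*b21 + a13*b31) (a11*b12 + a12*b22 + a13*b32) (a11*b13 + a12*b23 + a13*b33)
      (a21*b11 + a22*b21 + a23*b31) (a21*b12 + a22*b22 + a23*b32) (a21*b13 + a22*b23 + a23*b33)
      (a31*b11 + a32*b21 + a33*b31) (a31*b12 + a32*b22 + a33*b32) (a31*b13 + a32*b23 + a33*b33).
Proof.
apply/matrixP => i j; rewrite !mxE !big_ord_recr big_ord0 /= !mxE add0r.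
by case: i => [[|[|[|i]]] Hi]; case: j => [[|[|[|j]]] Hj].
Qed.

Lemma mx3_tr (a11 a12 a13 a21 a22 a23 a31 a32 a33 : R) :
  (mx3 a11 a12 a13 a21 a22 a23 a31 a32 a33)^T = mx3 a11 a21 a31 a12 a22 a32 a13 a23 a33.
Proof.
apply/matrixP => i j; rewrite !mxE.
by case: i => [[|[|[|i]]] Hi]; case: j => [[|[|[|j]]] Hj].
Qed.

Lemma mx3_map (g : R -> R) (a11 a12 a13 a21 a22 a23 a31 a32 a33 : R) :
  map_mx g (mx3 a11 a12 a13 a21 a22 a23 a31 a32 a33) =
  mx3 (g a11) (g a12) (g a13) (g a21) (g a22) (g a23) (g a31) (g a32) (g a33).
Proof.
apply/matrixP => i j; rewrite !mxE.
by case: i => [[|[|[|i]]] Hi]; case: j => [[|[|[|j]]] Hj].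
Qed.

Lemma mx3_1 : (1 : 'M[R]_3) = mx3 1 0 0 0 1 0 0 0 1.
Proof.
apply/matrixP => i j; rewrite !mxE.
by case: i => [[|[|[|i]]] Hi]; case: j => [[|[|[|j]]] Hj].
Qed.

Lemma mx3_det (a11 a12 a13 a21 a22 a23 a31 a32 a33 : R) :
  \det (mx3 a11 a12 a13 a21 a22 a23 a31 a32 a33) =
  a11 * (a22 * a33 - a23 * a32) - a12 * (a21 * a33 - a23 * a31)
  + a13 * (a21 * a32 - a22 * a31).
Proof.
rewrite (expand_det_row _ ord0) !big_ord_recr big_ord0 /= add0r.
rewrite /cofactor !(expand_det_row _ ord0) !big_ord_recr big_ord0 /= !add0r.
rewrite /cofactor !det_mx11 !mxE /=.
by rewrite !big_ord0 /= !add0r; ring. Qed.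
End MX3.
Section CosetOrder.
Local Open Scope group_scope.
Lemma coset_order (gT : finGroupType) (G : {group gT}) (g : gT) (n : nat) :
  g \in G -> (0 < n)%N -> (g ^+ n = 1)%g ->
  (forall k, (0 < k < n)%N -> exists2 h, h \in G & (g ^+ k * h != h * g ^+ k)%g) ->
  #[coset 'Z(G) g]%g = n.
Proof.
move=> gG n0 gn hk.
have nG : G \subset 'N('Z(G)) := normal_norm (center_normal G).
have gN : g \in 'N('Z(G)) := subsetP nG g gG.
have uk k : (coset 'Z(G) g ^+ k = coset 'Z(G) (g ^+ k))%g by rewrite morphX.
apply/eqP; rewrite eqn_leq; apply/andP; split.
  by apply: dvdn_leq => //; rewrite order_dvdn uk gn morph1.
rewrite leqNgt; apply/negP => lt.
have [h hG nc] := hk #[coset 'Z(G) g] (introT andP (conj (order_gt0 _) lt)).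
have := expg_order (coset 'Z(G) g); rewrite uk => /coset_idr.
rewrite groupX // => /(_ isT) /centerP [_ /(_ h hG) cm].
by rewrite cm eqxx in nc.
Qed.
End CosetOrder.

Section Fld.
Variables (F : finFieldType) (f q : nat).
Hypothesis hq : q = (2 ^ f)%N.
Hypothesis hF : #|F| = (q ^ 2)%N.

Lemma two0 : (2%:R : F) = 0.
Proof.
apply/eqP; rewrite -(@pcharf0 _ 2) ?(card_finPcharP (n := (f * 2)%N)) //.
by rewrite hF hq expnM.
Qed.

Lemma frob2D (x y : F) n : (x + y) ^+ (2 ^ n) = x ^+ (2 ^ n) + y ^+ (2 ^ n).
Proof.
elim: n => [|n IH]; first by rewrite !expn0 !expr1.
have t := two0.
by rewrite expnSr !exprM IH; ring: t.
Qed.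

Lemma frobD (x y : F) : (x + y) ^+ q = x ^+ q + y ^+ q.
Proof. by rewrite hq frob2D. Qed.

Lemma frobqq (x : F) : x ^+ q ^+ q = x.
Proof. by rewrite -exprM -{2}(expf_card x) hF expnS expn1. Qed.
Lemma frob0 : (0 : F) ^+ q = 0.
Proof. by rewrite expr0n hq expn_eq0. Qed.
Lemma frobN (x : F) : (- x) ^+ q = - x ^+ q.
Proof.
apply/eqP; rewrite -subr_eq0 opprK -frobD addNr. by rewrite frob0. Qed.
Lemma frobB (x y : F) : (x - y) ^+ q = x ^+ q - y ^+ q.
Proof. by rewrite frobD frobN. Qed.
Lemma frobsum n (g : 'I_n -> F) : (\sum_i g i) ^+ q = \sum_i (g i) ^+ q.
Proof. by apply: (big_morph (fun x => x ^+ q)); [exact: frobD | exact: frob0]. Qed.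

Lemma qbarM (A B : 'M[F]_3) : qbar q (A *m B) = qbar q A *m qbar q B.
Proof.
by apply/matrixP => i j; rewrite !mxE frobsum; apply: eq_bigr => k _; rewrite !mxE exprMn.
Qed.

Lemma qbar1 : qbar q (1 : 'M[F]_3) = 1.
Proof.
apply/matrixP => i j; rewrite !mxE; case: (i == j) => /=; first by rewrite expr1n.
exact: frob0.
Qed.

Lemma qbar_trmx (A : 'M[F]_3) : qbar q A^T = (qbar q A)^T.
Proof. by rewrite /qbar map_trmx. Qed.

Lemma SU_mul (A B : 'M[F]_3) : \det A = 1 -> (qbar q A)^T *m Wmx F *m A = Wmx F ->
  \det B = 1 -> (qbar q B)^T *m Wmx F *m B = Wmx F ->
  (\det (A *m B) == 1) && ((qbar q (A *m B))^T *m Wmx F *m (A *m B) == Wmx F).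
Proof.
move=> dx wx dy wy.
rewrite det_mulmx dx dy mulr1 eqxx /= qbarM trmx_mul.
by rewrite !mulmxA -(mulmxA (qbar q B)^T) -(mulmxA (qbar q B)^T) wx wy.
Qed.

Lemma SU3_group : group_set (SU3 F q).
Proof.
apply/group_setP; split.
  by rewrite inE /= det1 qbar1 trmx1 mul1mx mulmx1 !eqxx.
move=> x y; rewrite !inE /= => /andP[/eqP dx /eqP wx] /andP[/eqP dy /eqP wy].
exact: SU_mul dx wx dy wy.
Qed.


Lemma mx3_congr (a11 a12 a13 a21 a22 a23 a31 a32 a33 b11 b12 b13 b21 b22 b23 b31 b32 b33 : F) :
  a11 = b11 -> a12 = b12 -> a13 = b13 -> a21 = b21 -> a22 = b22 -> a23 = b23 ->
  a31 = b31 -> a32 = b32 -> a33 = b33 ->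
  mx3 a11 a12 a13 a21 a22 a23 a31 a32 a33 = mx3 b11 b12 b13 b21 b22 b23 b31 b32 b33.
Proof. by move=> -> -> -> -> -> -> -> -> ->. Qed.

Lemma mx3_11 (a11 a12 a13 a21 a22 a23 a31 a32 a33 : F) :
  mx3 a11 a12 a13 a21 a22 a23 a31 a32 a33 0 0 = a11.
Proof. by rewrite mxE. Qed.
Lemma mx3_31 (a11 a12 a13 a21 a22 a23 a31 a32 a33 : F) :
  mx3 a11 a12 a13 a21 a22 a23 a31 a32 a33 (inord 2) 0 = a31.
Proof. by rewrite mxE inordK. Qed.

Variables (a b : F).
Hypothesis hq4 : (4 <= q)%N.
Hypothesis hb0 : b != 0.
Hypothesis hbtr : b + b ^+ q = 1.
Hypothesis ha0 : a != 0.
Hypothesis haord : (q.+1).-primitive_root a.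

Lemma bq : b ^+ q = 1 + b.
Proof. have t := two0. rewrite -hbtr. ring: t. Qed.

Lemma aq : a ^+ q = a^-1.
Proof.
have := prim_expr_order haord; rewrite exprS => h.
by rewrite -[a ^+ q]mul1r -(mulVf ha0) -mulrA h mulr1.
Qed.

Definition Xm := mx3 b 1 1 (1 + b) 0 1 (b * (1 + b)) b (1 + b).
Definition Am := a * b + a^-1 * (1 + b).
Definition Bm := a * (b + b * (1 + b)) + a^-1 * ((1 + b) + b * (1 + b)).
Definition Cm := a + a^-1.
Definition Ym := mx3 Am 0 Bm 0 1 0 Cm 0 Am.
Definition Zm : 'M[F]_3 := mx3 1 0 1 0 1 0 0 0 1.

Lemma ev2 n : ((2 * n)%N%:R : F) = 0.
Proof. by rewrite natrM two0 mul0r. Qed.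
Lemma e2 : (2%:R : F) = 0. Proof. exact: (ev2 1). Qed.
Lemma m2 : (-2%:R : F) = 0. Proof. by rewrite e2 oppr0. Qed.
Lemma e4 : (4%:R : F) = 0. Proof. exact: (ev2 2). Qed.
Lemma m4 : (-4%:R : F) = 0. Proof. by rewrite e4 oppr0. Qed.
Lemma e6 : (6%:R : F) = 0. Proof. exact: (ev2 3). Qed.
Lemma m6 : (-6%:R : F) = 0. Proof. by rewrite e6 oppr0. Qed.
Lemma e8 : (8%:R : F) = 0. Proof. exact: (ev2 4). Qed.
Lemma m8 : (-8%:R : F) = 0. Proof. by rewrite e8 oppr0. Qed.
Lemma e10 : (10%:R : F) = 0. Proof. exact: (ev2 5). Qed.
Lemma m10 : (-10%:R : F) = 0. Proof. by rewrite e10 oppr0. Qed.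
Lemma e12 : (12%:R : F) = 0. Proof. exact: (ev2 6). Qed.
Lemma m12 : (-12%:R : F) = 0. Proof. by rewrite e12 oppr0. Qed.
Lemma e14 : (14%:R : F) = 0. Proof. exact: (ev2 7). Qed.
Lemma m14 : (-14%:R : F) = 0. Proof. by rewrite e14 oppr0. Qed.
Lemma e16 : (16%:R : F) = 0. Proof. exact: (ev2 8). Qed.
Lemma m16 : (-16%:R : F) = 0. Proof. by rewrite e16 oppr0. Qed.
Lemma e18 : (18%:R : F) = 0. Proof. exact: (ev2 9). Qed.
Lemma m18 : (-18%:R : F) = 0. Proof. by rewrite e18 oppr0. Qed.
Lemma e20 : (20%:R : F) = 0. Proof. exact: (ev2 10). Qed.
Lemma m20 : (-20%:R : F) = 0. Proof. by rewrite e20 oppr0. Qed.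
Lemma e24 : (24%:R : F) = 0. Proof. exact: (ev2 12). Qed.
Lemma m24 : (-24%:R : F) = 0. Proof. by rewrite e24 oppr0. Qed.
Lemma e32 : (32%:R : F) = 0. Proof. exact: (ev2 16). Qed.
Lemma m32 : (-32%:R : F) = 0. Proof. by rewrite e32 oppr0. Qed.
Lemma hai : a * a^-1 = 1. Proof. exact: mulfV. Qed.
Ltac c2 := apply/eqP; rewrite -subr_eq0; apply/eqP; ring: hai e2 m2 e4 m4 e6 m6 e8 m8 e10 m10 e12 m12 e14 m14 e16 m16 e18 m18 e20 m20 e24 m24 e32 m32.

Ltac frobsimp := rewrite /qbar mx3_map !(exprMn, frobD, expr1n, exprVn, aq, invrK, bq, frob0).

Lemma Xm_SU : \det Xm = 1 /\ (qbar q Xm)^T *m Wmx F *m Xm = Wmx F.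
Proof.
split; first by rewrite /Xm mx3_det; c2.
rewrite /Xm; frobsimp. rewrite mx3_tr /Wmx !mx3_mul.
apply: mx3_congr; c2.
Qed.

Lemma Ym_SU : \det Ym = 1 /\ (qbar q Ym)^T *m Wmx F *m Ym = Wmx F.
Proof.
split; first by rewrite mx3_det /Am /Bm /Cm; c2.
rewrite /Ym /Am /Bm /Cm; frobsimp. rewrite mx3_tr /Wmx !mx3_mul.
apply: mx3_congr; c2.
Qed.

Lemma Zm_SU : \det Zm = 1 /\ (qbar q Zm)^T *m Wmx F *m Zm = Wmx F.
Proof.
split; first by rewrite mx3_det; c2.
rewrite /Zm; frobsimp. rewrite mx3_tr /Wmx !mx3_mul.
apply: mx3_congr; c2.
Qed.

Lemma Xm2 : Xm *m Xm = 1.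
Proof. rewrite /Xm mx3_mul mx3_1; apply: mx3_congr; c2. Qed.
Lemma Ym2 : Ym *m Ym = 1.
Proof. rewrite /Ym /Am /Bm /Cm mx3_mul mx3_1; apply: mx3_congr; c2. Qed.
Lemma Zm2 : Zm *m Zm = 1.
Proof. rewrite /Zm mx3_mul mx3_1; apply: mx3_congr; c2. Qed.

Lemma odd_q1 : odd q.+1.
Proof.
by rewrite /= hq oddX /=; case: f hq hq4 => [|f'] -> //.
Qed.

Lemma sum_ne k : ~~ (q.+1 %| k)%N -> a ^+ k + a^-1 ^+ k != 0.
Proof.
move=> nd; apply/eqP => h.
have e : a ^+ k = a^-1 ^+ k.
  apply/eqP; rewrite -subr_eq0; apply/eqP.
  have -> : a ^+ k - a^-1 ^+ k = (a ^+ k + a^-1 ^+ k) - 2%:R * a^-1 ^+ k by ring.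
  by rewrite h e2 mul0r subr0.
apply: (negP nd); rewrite -(@Gauss_dvdl _ _ 2) ?coprimen2 ?odd_q1 // (prim_order_dvd haord).
by rewrite exprM expr2 {1}e -exprMn mulVf // expr1n eqxx.
Qed.

Lemma Cne : Cm != 0.
Proof.
have := @sum_ne 1; rewrite !expr1; apply.
by rewrite dvdn1; case: q hq4 => [|[|[|]]].
Qed.

Lemma XZ_ne : Xm *m Zm != Zm *m Xm.
Proof.
apply/eqP => h; have := congr1 (fun M : 'M[F]_3 => M 0 0) h.
rewrite /Xm /Zm !mx3_mul !mx3_11 => e.
have h0 : b * (1 + b) = (1*b + 0*(1+b) + 1*(b*(1+b))) - (b*1 + 1*0 + 1*0) by ring.
rewrite -e subrr in h0.
move/eqP: h0; apply/negP; rewrite mulf_neq0 // -bq expf_neq0 //.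
Qed.

Lemma YZ_ne : Ym *m Zm != Zm *m Ym.
Proof.
apply/eqP => h; have := congr1 (fun M : 'M[F]_3 => M 0 0) h.
rewrite /Ym /Zm !mx3_mul !mx3_11 => e.
have h0 : Cm = (1*Am + 0*0 + 1*Cm) - (Am*1 + 0*0 + Bm*0) by ring.
rewrite -e subrr in h0.
by move/eqP: h0; apply/negP; exact: Cne.
Qed.

Lemma mx3_scale (c a11 a12 a13 a21 a22 a23 a31 a32 a33 : F) :
  c *: mx3 a11 a12 a13 a21 a22 a23 a31 a32 a33 =
  mx3 (c*a11) (c*a12) (c*a13) (c*a21) (c*a22) (c*a23) (c*a31) (c*a32) (c*a33).
Proof.
apply/matrixP => i j; rewrite !mxE.
by case: i => [[|[|[|i]]] Hi]; case: j => [[|[|[|j]]] Hj].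
Qed.

Definition Tk k :=
  let x := a ^+ k in let y := a^-1 ^+ k in
  mx3 (Cm * ((Am + a) * x + (Am + a^-1) * y)) 0 ((Am + a) * (Am + a^-1) * (x + y))
      0 (Cm ^+ 2) 0
      (Cm ^+ 2 * (x + y)) 0 (Cm * ((Am + a^-1) * x + (Am + a) * y)).

Lemma Tpow k : Cm ^+ 2 *: (Zm *m Ym) ^+ k = Tk k.
Proof.
elim: k => [|k IH].
  rewrite expr0 mx3_1 mx3_scale /Tk !expr0 /Cm /Am; apply: mx3_congr; c2.
have -> : (Zm *m Ym) ^+ k.+1 = (Zm *m Ym) ^+ k *m (Zm *m Ym) by rewrite exprSr.
rewrite scalemxAl IH /Tk /Zm /Ym !mx3_mul !exprSr /Cm /Am /Bm.
apply: mx3_congr; c2.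
Qed.

Lemma mkGL_proof (A : 'M[F]_3) : \det A = 1 -> A \is a GRing.unit.
Proof. by move=> h; rewrite unitmxE h unitr1. Qed.
Definition mkGL (A : 'M[F]_3) (h : \det A = 1) : {'GL_3[F]} := @FinRing.Unit _ A (@mkGL_proof A h).

Lemma GLvalX (g : {'GL_3[F]}) k : GLval (g ^+ k)%g = GLval g ^+ k.
Proof. elim: k => [|k IH]; first by rewrite expg0 expr0. by rewrite expgS GL_ME IH exprS. Qed.

Lemma valX (g : {'GL_3[F]}) k : val (g ^+ k)%g = val g ^+ k.
Proof. exact: GLvalX. Qed.
Lemma valM (g h : {'GL_3[F]}) : val (g * h)%g = val g *m val h.
Proof. exact: GL_MxE. Qed.
Lemma val1 : val (1 : {'GL_3[F]})%g = 1.
Proof. by []. Qed.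

Lemma noncomm (g h : {'GL_3[F]}) : val g *m val h != val h *m val g -> (g * h != h * g)%g.
Proof. by apply: contra => /eqP e; rewrite -!valM e. Qed.

Definition SUg : {group {'GL_3[F]}} := Group SU3_group.

Lemma main :
  let X := mx3 b 1 1
               (b ^+ q) 0 1
               (b ^+ q.+1) b (b ^+ q) in
  let Y := mx3 (a * b + a^-1 * b ^+ q) 0
                 (a * (b + b ^+ q.+1) + a^-1 * (b ^+ q + b ^+ q.+1))
               0 1 0
               (a + a^-1) 0 (a * b + a^-1 * b ^+ q) in
  let Z := mx3 1 0 1
               0 1 0
               0 0 1 in
  exists gX gY gZ : {'GL_3[F]},
    [/\ val gX = X, val gY = Y, val gZ = Z,
        [/\ gX \in @SU3 F q, gY \in @SU3 F q & gZ \in @SU3 F q] &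
        [/\ #[@etaPSU F q gX]%g = 2%N, #[@etaPSU F q gY]%g = 2%N, #[@etaPSU F q gZ]%g = 2%N
          & #[(@etaPSU F q gZ * @etaPSU F q gY)%g]%g = q.+1]].
Proof.
move=> X Y Z.
have eX : X = Xm by rewrite /X exprS bq.
have eY : Y = Ym by rewrite /Y exprS bq.
have eZ : Z = Zm by [].
case: Xm_SU => dX wX; case: Ym_SU => dY wY; case: Zm_SU => dZ wZ.
pose gX := @mkGL _ dX; pose gY := @mkGL _ dY; pose gZ := @mkGL _ dZ.
have sX : gX \in SUg by rewrite inE /= dX wX !eqxx.
have sY : gY \in SUg by rewrite inE /= dY wY !eqxx.
have sZ : gZ \in SUg by rewrite inE /= dZ wZ !eqxx.
exists gX, gY, gZ; split => //.
rewrite /etaPSU -[SU3 F q]/(gval SUg).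
have nG : SUg \subset 'N('Z(SUg))%g := normal_norm (center_normal SUg).
have C2 : Cm ^+ 2 != 0 by rewrite expf_neq0 // Cne.
split.
- apply: coset_order => //; first by apply: val_inj; rewrite valX val1; exact: Xm2.
  case=> [|[|//]] // _; exists gZ => //.
  by apply: noncomm; rewrite expg1; exact: XZ_ne.
- apply: coset_order => //; first by apply: val_inj; rewrite valX val1; exact: Ym2.
  case=> [|[|//]] // _; exists gZ => //.
  by apply: noncomm; rewrite expg1; exact: YZ_ne.
- apply: coset_order => //; first by apply: val_inj; rewrite valX val1; exact: Zm2.
  case=> [|[|//]] // _; exists gY => //.
  by apply: noncomm; rewrite expg1 eq_sym; exact: YZ_ne.
rewrite -morphM ?(subsetP nG) //.
apply: coset_order => //; first by rewrite groupM.
  apply: val_inj; rewrite valX valM val1.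
  apply: (scalerI C2); rewrite Tpow /Tk exprVn (prim_expr_order haord) invr1 mx3_1 mx3_scale.
  rewrite /Cm /Am; apply: mx3_congr; c2.
move=> k /andP[k0 kq]; exists gZ => //.
apply: noncomm; rewrite valX valM.
apply/eqP => e.
have e2' : Tk k *m Zm = Zm *m Tk k by rewrite -!Tpow -scalemxAl -scalemxAr e.
have := congr1 (fun M : 'M[F]_3 => M 0 0) e2'.
rewrite /Tk /Zm !mx3_mul !mx3_11 => e3.
set p := Cm * _ in e3; set r := _ * (_ + _) in e3; set s := Cm ^+ 2 * _ in e3.
have h0 : s = (1 * p + 0 * 0 + 1 * s) - (p * 1 + 0 * 0 + r * 0) by ring.
rewrite -e3 subrr /s in h0.
move/eqP: h0; apply/negP; rewrite mulf_neq0 // sum_ne //.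
by apply: contraL kq => /(dvdn_leq k0); rewrite ltnNge => ->.
Qed.
End Fld.

Theorem lemma3p3 (f q : nat) (hq : q = (2 ^ f)%N) (hq4 : (4 <= q)%N)
  (F : finFieldType) (hF : #|F| = (q ^ 2)%N) (a b : F)
  (hb0 : b != 0) (hbtr : b + b ^+ q = 1) (hbn : b ^+ q.+1 != 1)
  (ha0 : a != 0) (haord : (q.+1).-primitive_root a)
  (h1 : forall i : nat,
      i \in [:: 0%N; f; (2 * f %/ gcdn 3 f)%N; (4 * f %/ gcdn 3 f)%N] ->
      (1 + b + b ^+ 2) ^+ (2 ^ i) != a + a^-1 + 1)
  (h2 : forall i : nat,
      i \in [:: 0%N; f; (2 * f %/ gcdn 3 f)%N; (4 * f %/ gcdn 3 f)%N] ->
      (1 + b + b ^+ 2) ^+ (2 ^ i)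
        != a * (1 + b + b ^+ 3 + b ^+ 4) + a^-1 * (b ^+ 2 + b ^+ 3 + b ^+ 4))
  (h3 : a + a^-1 + 1
        != a * (1 + b + b ^+ 3 + b ^+ 4) + a^-1 * (b ^+ 2 + b ^+ 3 + b ^+ 4))
  (h4 : a + a^-1 + 1 != 0) :
  let X := mx3 b 1 1
               (b ^+ q) 0 1
               (b ^+ q.+1) b (b ^+ q) in
  let Y := mx3 (a * b + a^-1 * b ^+ q) 0
                 (a * (b + b ^+ q.+1) + a^-1 * (b ^+ q + b ^+ q.+1))
               0 1 0
               (a + a^-1) 0 (a * b + a^-1 * b ^+ q) in
  let Z := mx3 1 0 1
               0 1 0
               0 0 1 in
  exists gX gY gZ : {'GL_3[F]},
    [/\ val gX = X, val gY = Y, val gZ = Z,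
        [/\ gX \in @SU3 F q, gY \in @SU3 F q & gZ \in @SU3 F q] &
        [/\ #[@etaPSU F q gX]%g = 2%N, #[@etaPSU F q gY]%g = 2%N, #[@etaPSU F q gZ]%g = 2%N
          & #[(@etaPSU F q gZ * @etaPSU F q gY)%g]%g = q.+1]].
Proof. exact: (@main F f q hq hF a b hq4 hb0 hbtr ha0 haord). Qed.
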